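(* Consider an $m$-partial SCS with schedule $(f,g)$ at time $t$, and let $\sigma$ be a simple path in a ring, starting at the position at time $t$ of one robot and ending at the position at time $t$ of another robot of the same ring. Let $A_1,\dots,A_s$ be the directed circle arcs traversed by $\sigma$ in order, following the travel direction of the ring, let $C_j$ denote the circle containing $A_j$ (the $C_j$ need not be distinct), let $t_i$ be the time required by a robot to traverse $A_i$, and let $\theta_j$ be the angular position in $C_j$ of the second endpoint of $A_j$. Then for all $1\le j\le s$, $$f(C_j)+g(C_j)\cdot 2\pi\cdot\Big(t+\sum_{i=1}^{j}t_i\Big)=\theta_j \pmod{2\pi}.$$
   Context: Let $T$ be a set of pairwise disjoint unit circles in the plane (trajectories) and $\epsilon<0.5$ a communication range; the graph of potential links $G_\epsilon(T)$ has the circle centers as nodes and an edge $\{i,j\}$ whenever the centers are at distance at most $2+\epsilon$; it is assumed connected. Points of a circle are identified with angles (modulo $2\pi$), and a robot traverses a circle (length $2\pi$) in one time unit. A schedule is a pair $(f,g)$, $f:T\to[0,2\pi)$, $g:T\to\{-1,1\}$ ($1$ = counterclockwise); the robot on $C$ is at angle $f(C)+2\pi g(C)t$ at time $t$. A communication graph $G=(V,E)$ is a connected spanning subgraph of $G_\epsilon(T)$. The link position $\phi_{ij}$ is the point of $C_i$ closest to $C_j$. A schedule is $G$-synchronized if for every $\{i,j\}\in E$ the robot on $C_i$ is at $\phi_{ij}$ exactly when the robot on $C_j$ is at $\phi_{ji}$. An SCS with communication graph $G$ consists of one robot per circle moving under a $G$-synchronized schedule with $g(C_i)=-g(C_j)$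 for all $\{i,j\}\in E$. Shifting protocol: when a robot on $C_i$ reaches $\phi_{ij}$ and there is no robot at $\phi_{ji}$, it moves to $C_j$ and thereafter follows the schedule of $C_j$. An $m$-partial SCS is obtained by removing all but $m$ robots, the remaining ones applying the shifting protocol. A ring is the closed path traversed by a robot that follows the assigned direction on each circle and always shifts to the neighboring circle at link positions. A path in a ring follows the travel direction of the ring; it is simple if it contains no full tour of the ring. *)

(* Defs.v *)
From Stdlib Require Import Reals Lra Lia Relations.
Open Scope R_scope.

Definition pt := (R * R)%type.
Definition dist (p q : pt) : R :=
  sqrt ((fst p - fst q) ^ 2 + (snd p - snd q) ^ 2).

Definition eqmod2pi (x y : R) : Prop := exists k : Z, x - y = 2 * PI * IZR k.

(* The trajectories: n unit circles C_0,...,C_{n-1}; circle i has center c i. *)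
Definition disjoint_unit_circles (n : nat) (c : nat -> pt) : Prop :=
  forall i j, (i < n)%nat -> (j < n)%nat -> i <> j -> 2 < dist (c i) (c j).

Definition potential_link (n : nat) (c : nat -> pt) (eps : R) (i j : nat) : Prop :=
  (i < n)%nat /\ (j < n)%nat /\ i <> j /\ dist (c i) (c j) <= 2 + eps.

Definition connected_on (n : nat) (E : nat -> nat -> Prop) : Prop :=
  forall i j, (i < n)%nat -> (j < n)%nat -> clos_refl_trans nat E i j.

Definition comm_graph (n : nat) (c : nat -> pt) (eps : R) (E : nat -> nat -> Prop) : Prop :=
  (forall i j, E i j -> potential_link n c eps i j) /\
  (forall i j, E i j -> E j i) /\
  connected_on n E.

(* theta is (an angle representing) the link position phi_ij: the point of C_i
   closest to C_j, i.e. the direction from c i towards c j. *)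
Definition link_angle (c : nat -> pt) (i j : nat) (theta : R) : Prop :=
  cos theta * dist (c i) (c j) = fst (c j) - fst (c i) /\
  sin theta * dist (c i) (c j) = snd (c j) - snd (c i).

(* Schedule (f,g): f C in [0,2pi), g C in {-1,1} (1 = counterclockwise). *)
Definition valid_schedule (n : nat) (f g : nat -> R) : Prop :=
  forall i, (i < n)%nat -> (0 <= f i < 2 * PI) /\ (g i = 1 \/ g i = -1).

Definition sched_angle (f g : nat -> R) (i : nat) (tau : R) : R :=
  f i + 2 * PI * g i * tau.

Definition synchronized (c : nat -> pt) (E : nat -> nat -> Prop) (f g : nat -> R) : Prop :=
  forall i j, E i j -> forall thi thj, link_angle c i j thi -> link_angle c j i thj ->
  forall tau, eqmod2pi (sched_angle f g i tau) thi <-> eqmod2pi (sched_angle f g j tau) thj.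

(* SCS with communication graph E (one robot per circle moving under (f,g)). *)
Definition SCS (c : nat -> pt) (E : nat -> nat -> Prop) (f g : nat -> R) : Prop :=
  synchronized c E f g /\ (forall i j, E i j -> g i = - g j).

Definition at_link (c : nat -> pt) (f g : nat -> R) (i j : nat) (tau : R) : Prop :=
  exists theta, link_angle c i j theta /\ eqmod2pi (sched_angle f g i tau) theta.

Definition circ_left (circ : nat -> R -> nat) (r : nat) (tau : R) (i : nat) : Prop :=
  exists delta, 0 < delta /\ forall tau', tau - delta < tau' < tau -> circ r tau' = i.

(* Some robot was on circle j (hence, if tau is a link time, at phi_ji)
   just before time tau. *)
Definition occupied_before (circ : nat -> R -> nat) (m j : nat) (tau : R) : Prop :=
  exists r', (r' < m)%nat /\ circ_left circ r' tau j.

(* m-partial SCS: robots 0..m-1; circ r tau is the circle on which robot r is at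
   time tau (the robot then is at angle sched_angle f g (circ r tau) tau, i.e. it
   follows the schedule of its current circle).  Robots start (time 0, before
   any shift) on pairwise distinct circles (all other robots of the SCS having
   been removed), and move according to the shifting protocol. *)
Definition partial_SCS (n : nat) (c : nat -> pt) (E : nat -> nat -> Prop)
    (f g : nat -> R) (m : nat) (circ : nat -> R -> nat) : Prop :=
  (* initial circles (encoded as the circle at negative times) *)
  (forall r tau, (r < m)%nat -> tau < 0 -> circ r tau = circ r (-(1))) /\
  (forall r, (r < m)%nat -> (circ r (-(1)) < n)%nat) /\
  (forall r r', (r < m)%nat -> (r' < m)%nat -> r <> r' -> circ r (-(1)) <> circ r' (-(1))) /\
  (forall r tau, (r < m)%nat -> 0 <= tau -> (circ r tau < n)%nat) /\
  (* circles change only at isolated instants (right-continuity, left limits) *)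
  (forall r tau, (r < m)%nat -> 0 <= tau ->
     exists delta, 0 < delta /\ forall tau', tau <= tau' < tau + delta -> circ r tau' = circ r tau) /\
  (forall r tau, (r < m)%nat -> 0 <= tau -> exists i, circ_left circ r tau i) /\
  (forall r tau i, (r < m)%nat -> 0 <= tau -> circ_left circ r tau i -> circ r tau <> i ->
     E i (circ r tau) /\ at_link c f g i (circ r tau) tau /\
     ~ occupied_before circ m (circ r tau) tau) /\
  (forall r tau i j, (r < m)%nat -> 0 <= tau -> circ_left circ r tau i -> E i j ->
     at_link c f g i j tau -> ~ occupied_before circ m j tau -> circ r tau = j).

(* A path in a ring: directed arcs A_1..A_s; A_k lies on circle C k, starts at
   angle a k and has angular length l k >= 0, traversed in direction g (C k);
   its second endpoint is a k + g (C k) * l k. *)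
Definition arc_end (g : nat -> R) (C : nat -> nat) (a l : nat -> R) (k : nat) : R :=
  a k + g (C k) * l k.

Definition ring_path (n : nat) (c : nat -> pt) (E : nat -> nat -> Prop) (g : nat -> R)
    (s : nat) (C : nat -> nat) (a l : nat -> R) : Prop :=
  (1 <= s)%nat /\
  (forall k, (1 <= k <= s)%nat -> (C k < n)%nat /\ 0 <= l k) /\
  (forall k, (1 < k < s)%nat -> 0 < l k) /\
  (forall k, (1 <= k < s)%nat ->
     E (C k) (C (S k)) /\
     (exists th, link_angle c (C k) (C (S k)) th /\ eqmod2pi (arc_end g C a l k) th) /\
     (exists th, link_angle c (C (S k)) (C k) th /\ eqmod2pi (a (S k)) th)) /\
  (* ring rule: the robot shifts at the first link position it meets *)
  (forall k j u th, (1 <= k <= s)%nat -> E (C k) j -> 0 < u < l k ->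
     link_angle c (C k) j th -> ~ eqmod2pi (a k + g (C k) * u) th) /\
  (* simple: no point of the ring is traversed twice (no full tour) *)
  (forall k k' u u', (1 <= k <= s)%nat -> (1 <= k' <= s)%nat -> C k = C k' ->
     0 <= u < l k -> 0 <= u' < l k' -> (k, u) <> (k', u') ->
     ~ eqmod2pi (a k + g (C k) * u) (a k' + g (C k') * u')).

Fixpoint prefix_sum (u : nat -> R) (j : nat) : R :=
  match j with
  | O => 0
  | S j' => prefix_sum u j' + u (S j')
  end.

(* time needed to traverse an arc of angular length len (a full circle takes 1) *)
Definition arc_time (len : R) : R := len / (2 * PI).

(* Main.v *)
Require Import Defs.
From Stdlib Require Import Reals Lra Lia.
Open Scope R_scope.

Lemma eqm_refl x : eqmod2pi x x.
Proof. exists 0%Z. simpl. ring. Qed.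
Lemma eqm_sym x y : eqmod2pi x y -> eqmod2pi y x.
Proof. intros [k Hk]. exists (-k)%Z. rewrite opp_IZR. lra. Qed.
Lemma eqm_trans x y z : eqmod2pi x y -> eqmod2pi y z -> eqmod2pi x z.
Proof. intros [k Hk] [k' Hk']. exists (k+k')%Z. rewrite plus_IZR. lra. Qed.
Lemma eqm_add x y d : eqmod2pi x y -> eqmod2pi (x + d) (y + d).
Proof. intros [k Hk]. exists k. lra. Qed.
Lemma eqm_eq x y : x = y -> eqmod2pi x y.
Proof. intros ->. apply eqm_refl. Qed.

Theorem proposition1 (n : nat) (c : nat -> pt) (eps : R) (E : nat -> nat -> Prop)
  (f g : nat -> R) (m : nat) (circ : nat -> R -> nat) (t : R)
  (r1 r2 : nat) (s : nat) (C : nat -> nat) (a l : nat -> R) :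
  0 < eps -> eps < 1/2 ->
  disjoint_unit_circles n c ->
  connected_on n (potential_link n c eps) ->
  comm_graph n c eps E ->
  valid_schedule n f g ->
  SCS c E f g ->
  partial_SCS n c E f g m circ ->
  0 <= t ->
  (r1 < m)%nat -> (r2 < m)%nat -> r1 <> r2 ->
  ring_path n c E g s C a l ->
  C 1%nat = circ r1 t ->
  eqmod2pi (a 1%nat) (sched_angle f g (circ r1 t) t) ->
  C s = circ r2 t ->
  eqmod2pi (arc_end g C a l s) (sched_angle f g (circ r2 t) t) ->
  forall j, (1 <= j <= s)%nat ->
    eqmod2pi (f (C j) + g (C j) * 2 * PI * (t + prefix_sum (fun i => arc_time (l i)) j))
             (arc_end g C a l j).
Proof.
  intros _ _ _ _ _ _ [Hsync _] _ _ _ _ _ [_ [_ [_ [Hlink _]]]] HC1 Ha1 _ _.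
  set (T := prefix_sum (fun i => arc_time (l i))).
  assert (PI2 : 2 * PI <> 0) by (pose proof PI_RGT_0; lra).
  assert (Hstep : forall k, sched_angle f g (C k) (t + T (k - 1)%nat + arc_time (l k))
                  = sched_angle f g (C k) (t + T (k - 1)%nat) + g (C k) * l k).
  { intros k. unfold sched_angle, arc_time. field. lra. }
  assert (Inv : forall k, (S k <= s)%nat ->
            eqmod2pi (sched_angle f g (C (S k)) (t + T k)) (a (S k))).
  { induction k as [|k IH]; intros Hk.
    - simpl. rewrite HC1. apply eqm_sym. eapply eqm_trans; [exact Ha1|].
      apply eqm_eq. f_equal. unfold T; simpl; lra.
    - destruct (Hlink (S k) ltac:(lia)) as [HE [[th [Hth Hth2]] [th' [Hth' Hth'2]]]].
      assert (H1 : eqmod2pi (sched_angle f g (C (S k)) (t + T (S k))) th).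
      { eapply eqm_trans; [|exact Hth2].
        pose proof (Hstep (S k)) as Hs. simpl in Hs. rewrite Nat.sub_0_r in Hs.
        replace (t + T (S k)) with (t + T k + arc_time (l (S k))) by (simpl; unfold T; simpl; lra).
        rewrite Hs. unfold arc_end. apply eqm_add. apply IH. lia. }
      apply (proj1 (Hsync _ _ HE th th' Hth Hth' _)) in H1.
      eapply eqm_trans; [exact H1| apply eqm_sym; exact Hth'2]. }
  intros j Hj. destruct j as [|k]; [lia|].
  eapply eqm_trans; [|apply eqm_add; apply (Inv k); lia].
  apply eqm_eq. unfold sched_angle, T, arc_time. simpl. field. lra.
Qed.
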